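(* Let $I$ be a BPPS instance with $d$ scenarios and let $\hat I$ be the instance obtained from $I$ by replacing small items as described in the context. Then $\mathrm{OPT}(\hat I)\le(1+2^{d+1}(d+1)\varepsilon)\,\mathrm{OPT}(I)+1$.
   Context: A BPPS instance has $d$ scenarios, items $\mathcal{I}$, each item $i$ with size $s_i$ and type (scenario set) $\mathcal{K}_i\subseteq\{1,\dots,d\}$, and bins of capacity $1$; $S_k=\{i:k\in\mathcal{K}_i\}$. A solution is a partition $\mathcal{B}$ of the items with $\sum_{i\in B\cap S_k}s_i\le1$ for all $B\in\mathcal{B}$ and all $k$, of value $\max_k|\{B\in\mathcal{B}:B\cap S_k\ne\emptyset\}|$; $\mathrm{OPT}$ is the minimum value. $\mathcal{T}$ is the set of all types. Fix $\varepsilon\in(0,1/4]$ with $1/\varepsilon$ an integer. Let $\mathcal{L}=\{i\in\mathcal{I}:s_i\ge\varepsilon^2\}$ and $\mathcal{S}=\mathcal{I}\setminus\mathcal{L}$; for $t\in\mathcal{T}$ let $\mathcal{S}_t$ be the items of $\mathcal{S}$ of type $t$, and let $\hat{\mathcal{S}}_t$ be a set of $\lceil\sum_{i\in\mathcal{S}_t}s_i/(\varepsilon-\varepsilon^2)\rceil$ new items, each of size $\varepsilon$ and type $t$. $\hat I$ is the instance with $d$ scenarios and item set $\mathcal{L}\cup\bigcup_{t\in\mathcal{T}}\hat{\mathcal{S}}_t$ (items of $\mathcal{L}$ keep their sizes and types). *)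

(* Defs.v *)
From HB Require Import structures.
From mathcomp Require Import all_boot all_order all_algebra.
Set Implicit Arguments. Unset Strict Implicit. Unset Printing Implicit Defensive.
Import Order.TTheory GRing.Theory Num.Theory.
Local Open Scope ring_scope.

(* A BPPS instance with d scenarios: a finite type of items I, sizes
   s : I -> R, and types K : I -> {set 'I_d} (scenarios are 'I_d). *)

Definition load (R : numDomainType) (d : nat) (I : finType)
  (s : I -> R) (K : I -> {set 'I_d}) (B : {set I}) (k : 'I_d) : R :=
  \sum_(i in B | k \in K i) s i.

Definition feasible (R : numDomainType) (d : nat) (I : finType)
  (s : I -> R) (K : I -> {set 'I_d}) (P : {set {set I}}) : bool :=
  partition P [set: I] &&
  [forall B in P, forall k : 'I_d, load s K B k <= 1].

Definition value (d : nat) (I : finType) (K : I -> {set 'I_d})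
  (P : {set {set I}}) : nat :=
  \max_(k : 'I_d) #|[set B in P | [exists i in B, k \in K i]]|.

(* OPT: minimum value over all feasible solutions (the default #|I| is never
   attained when a feasible solution exists, since any value is <= #|I|). *)
Definition OPT (R : numDomainType) (d : nat) (I : finType)
  (s : I -> R) (K : I -> {set 'I_d}) : nat :=
  \big[minn/#|I|]_(P : {set {set I}} | feasible s K P) value K P.

Definition nnew (R : archiRealFieldType) (d : nat) (I : finType)
  (s : I -> R) (K : I -> {set 'I_d}) (eps : R) (t : {set 'I_d}) : nat :=
  absz (Num.ceil ((\sum_(i | (s i < eps ^+ 2) && (K i == t)) s i)
                  / (eps - eps ^+ 2))%R).

Definition large (R : archiRealFieldType) (I : finType) (s : I -> R) (eps : R) :=
  {i : I | eps ^+ 2 <= s i}.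

Definition hat_items (R : archiRealFieldType) (d : nat) (I : finType)
  (s : I -> R) (K : I -> {set 'I_d}) (eps : R) : finType :=
  (large s eps + {t : {set 'I_d} & 'I_(nnew s K eps t)})%type.

Definition hat_size (R : archiRealFieldType) (d : nat) (I : finType)
  (s : I -> R) (K : I -> {set 'I_d}) (eps : R) (x : hat_items s K eps) : R :=
  match x with
  | inl i => s (val i)
  | inr _ => eps
  end.

Definition hat_type (R : archiRealFieldType) (d : nat) (I : finType)
  (s : I -> R) (K : I -> {set 'I_d}) (eps : R) (x : hat_items s K eps)
  : {set 'I_d} :=
  match x with
  | inl i => K (val i)
  | inr t => tag t
  end.

(* Main.v *)
Require Import Defs.
From HB Require Import structures.
From mathcomp Require Import all_boot all_order all_algebra.
From mathcomp Require Import zify.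
From mathcomp.algebra_tactics Require Import ring lra.
Import Order.TTheory GRing.Theory Num.Theory.

Module Helpers.
Set Implicit Arguments. Unset Strict Implicit. Unset Printing Implicit Defensive.

Lemma card_setD1P (X : finType) (A : {set X}) (x0 : X) (P : pred X) :
  x0 \in A -> #|[set x in A | P x]| = P x0 + #|[set x in A :\ x0 | P x]|.
Proof.
move=> Ax0; rewrite (cardsD1 x0) inE Ax0 /=; congr (_ + _).
by apply: eq_card => x; rewrite !inE andbA.
Qed.

Lemma distribute (X J C : finType) (tau : X -> C) (A : {set X}) (c : J -> C -> nat) :
  exists g : X -> option J,
   (forall j t, #|[set x in A | (tau x == t) && (g x == Some j)]| <= c j t) /\
   (forall t, #|[set x in A | (tau x == t) && (g x == None)]| <=
               #|[set x in A | tau x == t]| - \sum_j c j t).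
Proof.
move: {2}#|A| (erefl #|A|) c => n; elim: n A => [|n IH] A HA c.
  exists (fun _ => None); rewrite (cards0_eq HA); split => *;
  by rewrite (_ : [set x in set0 | _] = set0) ?cards0 // ; apply/setP=> x; rewrite !inE.
have [x0 Ax0] : exists x0, x0 \in A.
  by apply/set0Pn; rewrite -card_gt0 HA.
have HA' : #|A :\ x0| = n by move: HA; rewrite (cardsD1 x0) Ax0 => -[].
set t0 := tau x0.
case: (pickP (fun j => 0 < c j t0)) => [j0 Hj0|Hno].
- pose c' j t := if (j == j0) && (t == t0) then (c j t).-1 else c j t.
  have [g' [Hg1 Hg2]] := IH _ HA' c'.
  exists (fun x => if x == x0 then Some j0 else g' x); split.
  + move=> j t; rewrite (card_setD1P _ Ax0) eqxx -/t0.
    rewrite (_ : [set x in A :\ x0 | _] = [set x in A :\ x0 | (tau x == t) && (g' x == Some j)]); last first.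
      by apply/setP => x; rewrite !inE; case: (x =P x0) => //.
    have := Hg1 j t; rewrite /c'.
    have Hs : (Some j0 == Some j) = (j0 == j) by apply/eqP/eqP => [[]|->].
    rewrite Hs.
    case: (j =P j0) => [->|/eqP Hj]; case: (t =P t0) => [->|/eqP Ht];
      rewrite ?eqxx ?(negbTE Ht) ?andbF ?andbT ?(negbTE Hj) ?(eq_sym j0) ?(eq_sym t0) ?(negbTE Hj) ?(negbTE Ht) /=; try lia.
  + move=> t; rewrite (card_setD1P _ Ax0) eqxx /= andbF add0n.
    rewrite (card_setD1P _ Ax0).
    rewrite (_ : [set x in A :\ x0 | _] = [set x in A :\ x0 | (tau x == t) && (g' x == None)]); last first.
      by apply/setP => x; rewrite !inE; case: (x =P x0) => //.
    have := Hg2 t.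
    have E1 : \sum_j c j t = c j0 t + \sum_(j | j != j0) c j t by rewrite (bigD1 j0).
    have E2 : \sum_j c' j t = c' j0 t + \sum_(j | j != j0) c j t.
      by rewrite (bigD1 j0) //; congr (_ + _); apply: eq_bigr => j /negbTE; rewrite /c' => ->.
    rewrite E1 E2 /c' eqxx /=.
    case: (t =P t0) => [->|/eqP Ht] /=; rewrite ?eqxx /t0 ?(negbTE Ht) //=; last lia.
    move: Hj0; rewrite /t0; lia.
- have [g' [Hg1 Hg2]] := IH _ HA' c.
  exists (fun x => if x == x0 then None else g' x); split.
  + move=> j t; rewrite (card_setD1P _ Ax0) eqxx /= andbF add0n.
    rewrite (_ : [set x in A :\ x0 | _] = [set x in A :\ x0 | (tau x == t) && (g' x == Some j)]) //.
    by apply/setP => x; rewrite !inE; case: (x =P x0) => //.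
  + move=> t; rewrite (card_setD1P _ Ax0) eqxx /= andbT.
    rewrite (card_setD1P _ Ax0).
    rewrite (_ : [set x in A :\ x0 | _] = [set x in A :\ x0 | (tau x == t) && (g' x == None)]); last first.
      by apply/setP => x; rewrite !inE; case: (x =P x0) => //.
    have := Hg2 t.
    case: (tau x0 =P t) => [<-|_] /=; last lia.
    rewrite big1 ?subn0; first lia.
    by move=> j _; move: (Hno j) => /= /negbT; rewrite -leqNgt leqn0 => /eqP.
Qed.

Lemma bigmin_le (T : finType) (P : pred T) (F : T -> nat) x i0 :
  P i0 -> (\big[minn/x]_(i | P i) F i <= F i0)%N.
Proof.
move=> Pi0; have : i0 \in index_enum T by rewrite mem_index_enum.
elim: (index_enum T) => // a r IH; rewrite inE big_cons => /orP [/eqP <-|Hr].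
  by rewrite Pi0 geq_minl.
case: (P a) => //=; last exact: IH.
by rewrite geq_min (IH Hr) orbT.
Qed.

Section Gen.
Local Open Scope ring_scope.
Variables (R : numDomainType) (d : nat) (X : finType) (sz : X -> R) (T : X -> {set 'I_d}).

Lemma feasible_preim (J : finType) (g : X -> J) :
  (forall j k, \sum_(x | (g x == j) && (k \in T x)) sz x <= 1) ->
  feasible sz T (preim_partition g [set: X]).
Proof.
move=> H; apply/andP; split; first exact: preim_partitionP.
apply/forall_inP => B /imsetP [x _ ->]; apply/forallP => k.
rewrite /load; apply: le_trans (H (g x) k); rewrite le_eqVlt; apply/orP; left; apply/eqP.
by apply: eq_bigl => y; rewrite !inE eq_sym.
Qed.

Lemma OPT_le (J : finType) (g : X -> J) :
  (forall j k, \sum_(x | (g x == j) && (k \in T x)) sz x <= 1) ->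
  (OPT sz T <= \max_k #|[set j | [exists x, (g x == j) && (k \in T x)]]|)%N.
Proof.
move=> H; have fQ := feasible_preim H.
apply: leq_trans (@bigmin_le _ _ (value T) #|X| _ fQ) _.
apply/bigmax_leqP => k _; apply: leq_trans (leq_bigmax k).
pose h j := [set y in [set: X] | j == g y].
apply: leq_trans (leq_imset_card h _).
apply: subset_leq_card; apply/subsetP => B; rewrite inE => /andP [/imsetP [x _ ->]].
move=> /existsP [i /andP [Hi Hk]].
move: Hi; rewrite inE inE => /eqP Hgi.
apply/imsetP; exists (g i).
  by rewrite inE; apply/existsP; exists i; rewrite eqxx Hk.
by rewrite /h Hgi.
Qed.

Lemma value_le_card (P : {set {set X}}) : feasible sz T P -> (value T P <= #|X|)%N.
Proof.
move=> /andP [pP _].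
apply: (@leq_trans #|P|).
  by apply/bigmax_leqP => k _; apply: subset_leq_card; apply/subsetP => B; rewrite inE => /andP [].
rewrite -cardsT (card_partition pP) -sum1_card; apply: leq_sum => A PA.
rewrite card_gt0; apply/negP => /eqP A0; move: pP => /and3P [_ _ /negP]; apply.
by rewrite -A0.
Qed.

Lemma OPT_attained : (forall x, sz x <= 1) ->
  exists2 P, feasible sz T P & (value T P <= OPT sz T)%N.
Proof.
move=> H1; rewrite /OPT; elim/big_ind: _.
- exists (preim_partition id [set: X]); last first.
    apply: value_le_card; apply: feasible_preim => j k.
    rewrite (eq_bigl (fun x => (x == j) && (k \in T j))); last first.
      by move=> x; case: eqP => // ->.
    by case: (k \in T j); [rewrite (big_pred1 j) // => x; rewrite andbT | rewrite big_pred0 // => x; rewrite andbF].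
  apply: feasible_preim => j k.
  rewrite (eq_bigl (fun x => (x == j) && (k \in T j))); last first.
    by move=> x; case: eqP => // ->.
  by case: (k \in T j); [rewrite (big_pred1 j) // => x; rewrite andbT | rewrite big_pred0 // => x; rewrite andbF].
- move=> a b [P1 f1 h1] [P2 f2 h2]; case: (leqP a b) => hab.
    by exists P1 => //; rewrite (minn_idPl hab).
  by exists P2 => //; rewrite (minn_idPr (ltnW hab)).
- by move=> P fP; exists P.
Qed.
End Gen.

Section Main.
Local Open Scope ring_scope.
Variables (R : archiRealFieldType) (d : nat) (I : finType) (s : I -> R)
  (K : I -> {set 'I_d}) (eps : R).
Hypothesis spos : forall i, 0 < s i.
Hypothesis eps0 : 0 < eps.
Hypothesis eps4 : eps <= 4^-1.
Variable m : nat.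
Hypothesis Hm : eps^-1 = m%:R.

Let X := hat_items s K eps.
Let sz : X -> R := @hat_size R d I s K eps.
Let ty : X -> {set 'I_d} := @hat_type R d I s K eps.
Let n t := nnew s K eps t.
Definition isnew (x : X) := if x is inr _ then true else false.

Lemma card_new t : #|[set x : X | isnew x && (ty x == t)]| = n t.
Proof.
rewrite -sum1dep_card big_sumType /= big_pred0_eq add0n.
transitivity (\sum_(t' | t' == t) \sum_(j : 'I_(n t')) 1)%N.
  by rewrite sig_big_dep; apply: eq_bigl => u; rewrite andbT.
by rewrite (big_pred1 t) // sum1_card card_ord.
Qed.


Lemma natrB_le (p q : nat) (r : R) : 0 <= r -> p%:R - q%:R <= r -> ((p - q)%N)%:R <= r.
Proof.
move=> r0; case: (leqP q p) => hqp; first by rewrite natrB.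
by move=> _; have -> : (p - q)%N = 0%N by apply/eqP; rewrite subn_eq0 ltnW.
Qed.

Variable P : {set {set I}}.
Hypothesis fP : feasible s K P.

Let small i := s i < eps ^+ 2.
Let cnt k := #|[set B in P | [exists i in B, k \in K i]]|.
Let v := value K P.
Let a (B : {set I}) (t : {set 'I_d}) := \sum_(i in B | small i && (K i == t)) s i.
Let c (B : {set I}) (t : {set 'I_d}) := if B \in P then Num.truncn (a B t / eps) else 0%N.
Let S (t : {set 'I_d}) := \sum_(i | small i && (K i == t)) s i.
Let Nt (t : {set 'I_d}) := #|[set B in P | [exists i in B, small i && (K i == t)]]|.

Lemma partP : partition P [set: I]. Proof. by case/andP: fP. Qed.
Lemma coverP : cover P = [set: I]. Proof. by case/and3P: partP => /eqP. Qed.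
Lemma tiP : trivIset P. Proof. by case/and3P: partP. Qed.
Lemma loadP B k : B \in P -> load s K B k <= 1.
Proof. by case/andP: fP => _ /forall_inP H /H /forallP. Qed.
Lemma cnt_le k : (cnt k <= v)%N.
Proof. by rewrite /v /value; apply: (leq_bigmax k). Qed.

Lemma a_ge0 (B : {set I}) (t : {set 'I_d}) : 0 <= a B t.
Proof. by apply: sumr_ge0 => i _; apply: ltW. Qed.
Lemma S_ge0 (t : {set 'I_d}) : 0 <= S t.
Proof. by apply: sumr_ge0 => i _; apply: ltW. Qed.

Lemma c_le (B : {set I}) (t : {set 'I_d}) : (c B t)%:R * eps <= a B t.
Proof.
rewrite /c; case: ifP => _; last by rewrite mul0r a_ge0.
have h : (Num.truncn (a B t / eps))%:R <= a B t / eps.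
  by rewrite Num.Theory.truncn_le divr_ge0 // ?a_ge0 // ltW.
by rewrite -(ler_pM2r eps0) divfK ?gt_eqF // in h.
Qed.

Lemma a0 (B : {set I}) (t : {set 'I_d}) : ~~ [exists i in B, small i && (K i == t)] -> a B t = 0.
Proof.
move=> /existsPn H; rewrite /a big_pred0 // => i; apply/negP => Hi.
by move: (H i); rewrite Hi.
Qed.

Lemma c_pos (B : {set I}) (t : {set 'I_d}) : (0 < c B t)%N -> B \in P /\ [exists i in B, small i && (K i == t)].
Proof.
rewrite /c; case: ifP => // BP Hc; split => //.
case: (boolP [exists i in B, small i && (K i == t)]) => // /a0 H; move: Hc; rewrite H mul0r.
by rewrite (_ : Num.truncn 0 = 0%N) // Num.Theory.truncn0.
Qed.

Lemma card_sum_ind (T : finType) (A : {set T}) (e : pred T) :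
  (#|[set x in A | e x]|)%:R = \sum_(x in A) (if e x then 1 else 0 : R).
Proof.
rewrite -sum1dep_card natr_sum big_mkcondr /=; apply: eq_bigr => x _.
by case: (e x).
Qed.

Lemma sumP_a t : \sum_(B in P) a B t = S t.
Proof.
rewrite /a -(big_trivIset_cond _ tiP) coverP; apply: eq_bigl => i.
by rewrite inE.
Qed.

Lemma csum_ge t : S t / eps - (Nt t)%:R <= (\sum_B c B t)%:R.
Proof.
rewrite natr_sum.
have -> : \sum_B (c B t)%:R = \sum_(B in P) (c B t)%:R :> R.
  rewrite [RHS]big_mkcond; apply: eq_bigr => B _; rewrite /c; by case: ifP.
rewrite -sumP_a /Nt card_sum_ind mulr_suml -sumrB; apply: ler_sum => B BP.
case: ifP => [_|/negbT /a0 ->]; last by rewrite mul0r subr0.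
have := Num.Theory.truncnS_gt (a B t / eps); rewrite /c BP -natr1 => h.
lra.
Qed.

Lemma eps4' : 4 * eps <= 1.
Proof. by have := eps4; rewrite -(ler_pM2l (_ : 0 < 4)) // divff // pnatr_eq0. Qed.

Lemma heps : 0 < eps - eps ^+ 2.
Proof. by rewrite expr2 -{1}(mulr1 eps) -mulrBr; apply: mulr_gt0 => //; have := eps4'; lra. Qed.

Lemma n_lt t : (n t)%:R < S t / (eps - eps ^+ 2) + 1.
Proof.
rewrite /n /nnew -/(S t).
set x := S t / (eps - eps ^+ 2).
have x0 : 0 <= x by rewrite divr_ge0 ?S_ge0 // ltW // heps.
have c0 : 0 <= Num.ceil x by rewrite real_ceil_ge0 ?num_real //; lra.
rewrite natr_absz ger0_norm //.
have := real_ceilB1_lt (num_real x); rewrite intrB => h; lra.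
Qed.

Lemma key_ineq t : S t / (eps - eps ^+ 2) <= S t / eps + 2 * S t.
Proof.
have S0 := S_ge0 t; have e4 := eps4'.
have h1 : S t / (eps - eps ^+ 2) = S t / eps + S t / (1 - eps).
  have e1 : 1 - eps != 0 by apply/eqP; lra.
  have e2 : eps != 0 by rewrite gt_eqF.
  have e3 : eps - eps ^+ 2 != 0 by rewrite gt_eqF // heps.
  by field; rewrite e1 e2 /=; rewrite expr2 -{1}(mulr1 eps) -mulrBr mulf_neq0.
rewrite h1 lerD2l ler_pdivrMr; last lra.
nra.
Qed.

Lemma left_bound t : ((n t - \sum_B c B t)%N)%:R <= 2 * S t + 2 * (Nt t)%:R.
Proof.
have S0 := S_ge0 t.
apply: natrB_le; first by apply: addr_ge0; apply: mulr_ge0 => //.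
case: (boolP [exists i, small i && (K i == t)]) => [/existsP [i Hi] | nex].
- have Nt1 : 1 <= (Nt t)%:R :> R.
    rewrite ler1n /Nt card_gt0; apply/set0Pn; exists (pblock P i).
    rewrite inE pblock_mem ?coverP ?inE //=; apply/existsP; exists i.
    by rewrite Hi mem_pblock coverP inE.
  have := n_lt t; have := csum_ge t; have := key_ineq t; lra.
- have St0 : S t = 0.
    rewrite /S big_pred0 // => i; apply/negP => Hi; move/existsPn: nex => /(_ i).
    by rewrite Hi.
  rewrite /n /nnew -/(S t) St0 mul0r Num.Theory.ceil0 /= sub0r.
  have : 0 <= (\sum_B c B t)%:R :> R by [].
  have : 0 <= (Nt t)%:R :> R by [].
  lra.
Qed.

Lemma Nt_le t : t != set0 -> (Nt t <= v)%N.
Proof.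
case/set0Pn => k kt; apply: leq_trans (cnt_le k).
apply: subset_leq_card; apply/subsetP => B; rewrite !inE => /andP [-> /existsP [i /andP [iB /andP [_ /eqP Ki]]]].
by apply/existsP; exists i; rewrite iB Ki.
Qed.

Lemma card_types : #|{set 'I_d}| = (2 ^ d)%N.
Proof.
rewrite -cardsT (_ : [set: {set 'I_d}] = powerset [set: 'I_d]) ?card_powerset ?cardsT ?card_ord //.
by apply/setP => A; rewrite inE powersetE subsetT.
Qed.

Lemma sum_scen k : \sum_(i | k \in K i) s i <= (cnt k)%:R.
Proof.
have -> : \sum_(i | k \in K i) s i = \sum_(B in P) load s K B k.
  rewrite /load -(big_trivIset_cond _ tiP) coverP; apply: eq_bigl => i.
  by rewrite inE.
rewrite /cnt card_sum_ind; apply: ler_sum => B BP.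
case: ifP => [_|/negbT /existsPn H]; first exact: loadP.
rewrite /load big_pred0 // => i; apply/negP => /andP [iB kK].
by move: (H i); rewrite iB kK.
Qed.

Lemma sumS : \sum_(t | t != set0) S t <= (d * v)%:R.
Proof.
have -> : \sum_(t | t != set0) S t = \sum_(i | small i && (K i != set0)) s i.
  symmetry; rewrite (partition_big K (fun t => t != set0)) => [|i /andP [] //].
  apply: eq_bigr => t t0; apply: eq_bigl => i.
  by case: (K i =P t) => [->|_]; rewrite ?t0 ?andbT ?andbF.
apply: (@le_trans _ _ (\sum_i \sum_(k in K i) s i)).
  rewrite big_mkcond; apply: ler_sum => i _.
  case: ifP => [/andP [_ Hne]|_]; last by apply: sumr_ge0 => k _; apply: ltW.
  rewrite sumr_const; move: Hne; rewrite -card_gt0.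
  case: #|K i| => [|n0] // _; rewrite mulrS lerDl mulrn_wge0 // ltW //.
have -> : \sum_i \sum_(k in K i) s i = \sum_k \sum_(i | k \in K i) s i.
  under eq_bigr do rewrite big_mkcond; rewrite exchange_big.
  by apply: eq_bigr => k _; rewrite [RHS]big_mkcond.
apply: (@le_trans _ _ (\sum_(k : 'I_d) v%:R)).
  apply: ler_sum => k _; apply: le_trans (sum_scen k) _.
  by rewrite ler_nat cnt_le.
by rewrite sumr_const card_ord natrM mulrC mulr_natr.
Qed.

Lemma leftover_total :
  \sum_(t | t != set0) ((n t - \sum_B c B t)%N)%:R <= (2 ^ d.+1 * d.+1 * v)%N%:R :> R.
Proof.
apply: (@le_trans _ _ (\sum_(t | t != set0) (2 * S t + 2 * (Nt t)%:R))).
  by apply: ler_sum => t _; apply: left_bound.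
rewrite big_split /= -!mulr_sumr.
have h1 := sumS.
have h2 : \sum_(t | t != set0) (Nt t)%:R <= (2 ^ d * v)%N%:R :> R.
  apply: (@le_trans _ _ (\sum_(t : {set 'I_d}) v%:R)).
    rewrite [X in _ <= X](bigID (fun t => t != set0)) /= -[X in X <= _]addr0.
    apply: lerD; first by apply: ler_sum => t t0; rewrite ler_nat Nt_le.
    by apply: sumr_ge0.
  by rewrite sumr_const card_types natrM mulrC mulr_natr.
have h3 : (2 * (d * v)%:R + 2 * (2 ^ d * v)%N%:R <= (2 ^ d.+1 * d.+1 * v)%N%:R :> R).
  rewrite -!natrM -natrD ler_nat expnS.
  have : (1 <= 2 ^ d)%N by rewrite expn_gt0.
  nia.
apply: le_trans h3; apply: lerD; apply: ler_wpM2l => //.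
Qed.

Lemma sum_const_card (T : finType) (Q : pred T) (e : R) :
  \sum_(x | Q x) e = (#|[set x | Q x]|)%:R * e.
Proof.
by rewrite -sum1dep_card natr_sum mulr_suml; apply: eq_bigr => x _; rewrite mul1r.
Qed.

Lemma card_sum_split (A B : finType) (Sx : {set (A + B)%type}) :
  #|Sx| = (#|[set a | inl a \in Sx]| + #|[set b | inr b \in Sx]|)%N.
Proof. by rewrite -[LHS]sum1_card big_sumType !sum1dep_card. Qed.

Lemma large_sum (F : I -> R) :
  \sum_(i : large s eps) F (val i) = \sum_(i | eps ^+ 2 <= s i) F i.
Proof.
rewrite [RHS](eq_bigl (fun i => (i \in (fun i => eps ^+ 2 <= s i)) && true)); last by move=> i; rewrite andbT.
exact: (esym (big_sub_cond _ _ _)).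
Qed.

Lemma m_pos : (0 < m)%N.
Proof. by rewrite -(ltr0n R) -Hm invr_gt0. Qed.

Lemma main_bound :
  (OPT sz ty)%:R <= (1 + (2 ^ d.+1)%:R * (d.+1)%:R * eps) * v%:R + 1.
Proof.
pose A1 := [set x : X | isnew x].
have [g1 [H1a H1b]] := distribute ty A1 c.
pose L0 := [set x in A1 | (g1 x == None) && (ty x != set0)].
have m0 := m_pos.
pose N := (#|L0| %/ m).+1.
have [g2 [H2a H2b]] := distribute (fun _ : X => tt) L0 (fun (_ : 'I_N) (_ : unit) => m).
have g2L0 : forall x, x \in L0 -> g2 x != None.
  move=> x xL; apply/negP => /eqP gx.
  have := H2b tt.
  rewrite (_ : [set x in L0 | tt == tt] = L0); last by apply/setP => y; rewrite !inE andbT.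
  rewrite sum_nat_const card_ord.
  have -> : (#|L0| - N * m = 0)%N by apply/eqP; rewrite subn_eq0 ltnW // ltn_ceil.
  rewrite leqn0 cards_eq0 => /eqP E.
  have : x \in [set x in L0 | (tt == tt) && (g2 x == None)] by rewrite in_set xL gx eqxx.
  by rewrite E in_set0.
pose G (x : X) : ({set I} + 'I_N)%type :=
  match x with
  | inl i => inl (pblock P (val i))
  | inr _ => match g1 x with
             | Some B => inl B
             | None => match g2 x with Some j => inr j | None => inl set0 end
             end
  end.
have Hload : forall j k, \sum_(x | (G x == j) && (k \in ty x)) sz x <= 1.
  move=> [B0|n0] k; last first.
    apply: (@le_trans _ _ (\sum_(x | (x \in L0) && (g2 x == Some n0)) eps)).
      rewrite big_mkcond [X in _ <= X]big_mkcond; apply: ler_sum => x _.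
      case: ifP => [/andP [Gx kx]|_]; last by case: ifP => // _; apply: ltW.
      move: Gx kx; rewrite /G /ty /sz; case: x => [i|u] //=.
      case E1: (g1 (inr u)) => [B'|] //; case E2: (g2 (inr u)) => [j|] //.
      move=> /eqP [] -> ku.
      have uL : inr u \in L0.
        by rewrite !inE E1 /=; apply/set0Pn; exists k.
      by rewrite uL eqxx.
    rewrite sum_const_card.
    have hc : (#|[set x | (x \in L0) && (g2 x == Some n0)]| <= m)%N.
      apply: leq_trans (H2a n0 tt); apply: subset_leq_card; apply/subsetP => x.
      by rewrite !inE.
    apply: (@le_trans _ _ (m%:R * eps)).
      by apply: ler_wpM2r; [apply: ltW | rewrite ler_nat].
    by rewrite -Hm mulVf // gt_eqF.
  pose Fl (x : X) := if x is inl i then (if (pblock P (val i) == B0) && (k \in K (val i)) then s (val i) else 0) else 0.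
  pose Fn (x : X) := if [&& isnew x, g1 x == Some B0 & k \in ty x] then eps else 0.
  apply: (@le_trans _ _ (\sum_x (Fl x + Fn x))).
    rewrite big_mkcond; apply: ler_sum => x _.
    case: ifP => [/andP [Gx kx]|_]; last first.
      apply: addr_ge0; first by rewrite /Fl; case: x => [i|u] //; case: ifP => // _; apply: ltW.
      by rewrite /Fn; case: ifP => // _; apply: ltW.
    move: Gx kx; rewrite /G /Fl /Fn /ty /sz; case: x => [i|u] /=.
    - by move=> /eqP [] -> ki; rewrite eqxx ki /= addr0.
    - case E1: (g1 (inr u)) => [B'|].
        by move=> /eqP [] -> ku; rewrite eqxx ku /= add0r.
      case E2: (g2 (inr u)) => [j|] //; move=> _ ku; exfalso.
      have uL : inr u \in L0.
        by rewrite !inE E1 /=; apply/set0Pn; exists k.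
      by move: (g2L0 _ uL); rewrite E2.
  rewrite big_split /=.
  have hn : \sum_x Fn x <= \sum_(t : {set 'I_d} | k \in t) (c B0 t)%:R * eps.
    rewrite /Fn -big_mkcond /=.
    rewrite (partition_big ty (fun t => k \in t)); last by move=> x /and3P [].
    apply: ler_sum => t kt; rewrite sum_const_card; apply: ler_wpM2r; first exact: ltW.
    rewrite ler_nat.
    apply: leq_trans (H1a B0 t); apply: subset_leq_card; apply/subsetP => x.
    by rewrite !inE => /andP [/and3P [-> -> _] ->].
  have hl : \sum_x Fl x = \sum_(i | (~~ small i) && (pblock P i == B0) && (k \in K i)) s i.
    rewrite big_sumType /= [X in _ + X]big1 ?addr0 //.
    rewrite (large_sum (fun j => if (pblock P j == B0) && (k \in K j) then s j else 0)).
    rewrite [RHS](eq_bigl (fun i => (eps ^+ 2 <= s i) && ((pblock P i == B0) && (k \in K i)))); last first.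
      by move=> i; rewrite /small -leNgt andbA.
    by rewrite big_mkcondr.
  case: (boolP (B0 \in P)) => B0P; last first.
    have hl0 : \sum_(i | (~~ small i) && (pblock P i == B0) && (k \in K i)) s i = 0.
      apply: big_pred0 => i; apply/negbTE/negP => /andP [/andP [_ /eqP E] _]; move: B0P.
      by rewrite -E pblock_mem // coverP inE.
    rewrite hl hl0 add0r.
    apply: le_trans hn _; rewrite big1 ?ler01 // => t _.
    by rewrite /c (negbTE B0P) mul0r.
  have ha : \sum_(t : {set 'I_d} | k \in t) a B0 t = \sum_(i in B0 | small i && (k \in K i)) s i.
    symmetry; rewrite (partition_big K (fun t => k \in t)) => [|i /andP [_ /andP [_ ->]] //].
    apply: eq_bigr => t kt; rewrite /a; apply: eq_bigl => i.
    by case: (K i =P t) => [->|]; rewrite ?kt ?andbT ?andbF.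
  have hlB : \sum_(i | (~~ small i) && (pblock P i == B0) && (k \in K i)) s i
      = \sum_(i in B0 | ~~ small i && (k \in K i)) s i.
    apply: eq_bigl => i.
    have -> : (pblock P i == B0) = (i \in B0).
      apply/eqP/idP => [<-|iB]; first by rewrite mem_pblock coverP inE.
      exact: def_pblock tiP B0P iB.
    by case: (i \in B0); case: (small i); case: (k \in K i).
  have hsplit : load s K B0 k = \sum_(i in B0 | small i && (k \in K i)) s i
                              + \sum_(i in B0 | ~~ small i && (k \in K i)) s i.
    rewrite /load (bigID small) /=; congr (_ + _); apply: eq_bigl => i.
      by case: (i \in B0); case: (small i); case: (k \in K i).
    by case: (i \in B0); case: (small i); case: (k \in K i).
  have hca : \sum_(t : {set 'I_d} | k \in t) (c B0 t)%:R * eps <= \sum_(t : {set 'I_d} | k \in t) a B0 t.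
    by apply: ler_sum => t _; apply: c_le.
  have := loadP k B0P; rewrite hsplit hl hlB -ha => hload.
  lra.
have Hlab : forall k, (#|[set j | [exists x, (G x == j) && (k \in ty x)]]| <= cnt k + N)%N.
  move=> k; rewrite card_sum_split; apply: leq_add; last first.
    by apply: leq_trans (max_card _) _; rewrite card_ord.
  apply: subset_leq_card; apply/subsetP => B; rewrite !inE => /existsP [x /andP [/eqP Gx kx]].
  move: Gx kx; rewrite /G /ty; case: x => [i|u] /=.
  - case=> <- ki; rewrite pblock_mem ?coverP ?inE //=; apply/existsP; exists (val i).
    by rewrite mem_pblock coverP inE ki.
  - case E1: (g1 (inr u)) => [B'|].
    + case=> <- ku.
      have : (0 < c B' (tag u))%N.
        apply: leq_trans (H1a B' (tag u)); rewrite card_gt0; apply/set0Pn; exists (inr u).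
        by rewrite !inE E1 /= !eqxx.
      move/c_pos => [BP /existsP [i /andP [iB /andP [_ /eqP Ki]]]].
      by rewrite BP /=; apply/existsP; exists i; rewrite iB Ki.
    + case E2: (g2 (inr u)) => [j|] //; case=> _ ku; exfalso.
      have uL : inr u \in L0.
        by rewrite !inE E1 /=; apply/set0Pn; exists k.
      by move: (g2L0 _ uL); rewrite E2.
have HL0 : (#|L0| <= \sum_(t | t != set0) (n t - \sum_B c B t))%N.
  have -> : #|L0| = (\sum_t #|[set x in L0 | ty x == t]|)%N.
    rewrite -[LHS]sum1_card (partition_big ty xpredT) //=; apply: eq_bigr => t _.
    by rewrite sum1dep_card.
  rewrite (bigID (fun t => t != set0)) /=.
  rewrite [X in (_ + X)%N]big1 ?addn0; last first.
    move=> t /negPn /eqP ->; apply/eqP; rewrite cards_eq0; apply/eqP/setP => x.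
    by rewrite !inE; case: (ty x == set0); rewrite ?andbF ?andbT.
  apply: leq_sum => t t0.
  apply: (@leq_trans #|[set x in A1 | (ty x == t) && (g1 x == None)]|).
    apply: subset_leq_card; apply/subsetP => x; rewrite !inE.
    by case/andP => /andP [-> /andP [-> _]] ->.
  apply: leq_trans (H1b t) _.
  rewrite (_ : [set x in A1 | ty x == t] = [set x | isnew x && (ty x == t)]) ?card_new //.
  by apply/setP => x; rewrite !inE.
have HOPT := OPT_le Hload.
have HOPT2 : (OPT sz ty <= v + N)%N.
  apply: leq_trans HOPT _; apply/bigmax_leqP => k _.
  by apply: leq_trans (Hlab k) _; rewrite leq_add2r cnt_le.
have hL : (#|L0|)%:R <= (2 ^ d.+1 * d.+1 * v)%N%:R :> R.
  by apply: le_trans (leftover_total); rewrite -natr_sum ler_nat.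
have hq : (#|L0| %/ m)%:R <= (#|L0|)%:R * eps :> R.
  have e : eps = (m%:R)^-1 by rewrite -Hm invrK.
  by rewrite e ler_pdivlMr ?ltr0n // -natrM ler_nat leq_trunc_div.
have hL2 : (#|L0|)%:R * eps <= (2 ^ d.+1 * d.+1 * v)%N%:R * eps :> R.
  by apply: ler_wpM2r => //; apply: ltW.
rewrite !natrM in hL2.
apply: le_trans (_ : (v + N)%N%:R <= _); first by rewrite ler_nat.
rewrite /N -addn1 !natrD.
lra.
Qed.

End Main.

End Helpers.
Import Helpers.

Local Open Scope ring_scope.

Theorem lemma8 (R : archiRealFieldType) (d : nat) (I : finType)
  (s : I -> R) (K : I -> {set 'I_d}) (eps : R) :
  (forall i, 0 < s i <= 1) ->
  0 < eps -> eps <= 4^-1 -> (exists m : nat, eps^-1 = m%:R) ->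
  (OPT (@hat_size R d I s K eps) (@hat_type R d I s K eps))%:R
    <= (1 + (2 ^ d.+1)%:R * (d.+1)%:R * eps) * (OPT s K)%:R + 1.
Proof.
move=> Hs eps0 eps4 [m Hm].
have spos i : 0 < s i by case/andP: (Hs i).
have s1 i : s i <= 1 by case/andP: (Hs i).
have [P fP hv] := OPT_attained K s1.
apply: le_trans (main_bound spos eps0 eps4 Hm fP) _.
rewrite lerD2r; apply: ler_wpM2l; last by rewrite ler_nat.
by rewrite addr_ge0 // mulr_ge0 // ?mulr_ge0 // ltW.
Qed.
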